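(* Let $k\ge1$, let $l\le m$ be positive integers, and let $P$ be a polynomial with $P(m)>0$. Let $S_{l,P(m)}=\{A\in M_l : |\mathcal{V}(X\otimes Y=A)|>P(m)\}$. Then $|S_{l,P(m)}|\le \dfrac{m^{k^2+1}}{P(m)}\,|M_l|$.
   Context: Max-times product on $\mathrm{Mat}_k(\mathbb{Z}_{\geq 1})$: $(X\otimes Y)_{ij}=\max_{1\le l\le k}(x_{il}\cdot y_{lj})$. For $a\ge1$, $\mathrm{size}_2(a)=\lfloor\log_2 a\rfloor+1$; for a $k\times k$ matrix $A$, $\mathrm{size}_2(A)=\sum_{i,j}\mathrm{size}_2(a_{ij})+k^2-1$. $M_l=\{A\in\mathrm{Mat}_k(\mathbb{Z}_{\geq 1}) : \mathrm{size}_2(A)=l\}$. For $A\in\mathrm{Mat}_k(\mathbb{Z}_{\geq 1})$, $\mathcal{V}(X\otimes Y=A)$ is the set of pairs $(X,Y)\in\mathrm{Mat}_k(\mathbb{Z}_{\geq 1})^2$ with $X\otimes Y=A$. *)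

(* Defs.v *)
From HB Require Import structures.
From mathcomp Require Import all_boot all_order all_algebra.
From mathcomp Require Import boolp classical_sets cardinality.
From mathcomp Require Import finmap.
Set Implicit Arguments. Unset Strict Implicit. Unset Printing Implicit Defensive.
Import Order.TTheory GRing.Theory Num.Theory.
Local Open Scope classical_set_scope.

Definition posmx (k : nat) (A : 'M[nat]_k) : Prop := forall i j, (0 < A i j)%N.

Definition maxtimes (k : nat) (X Y : 'M[nat]_k) : 'M[nat]_k :=
  \matrix_(i, j) \max_(l < k) (X i l * Y l j)%N.

Definition size2 (a : nat) : nat := (trunc_log 2 a).+1.

Definition size2mx (k : nat) (A : 'M[nat]_k) : nat :=
  ((\sum_(i < k) \sum_(j < k) size2 (A i j)) + k ^ 2 - 1)%N.

Definition Ml (k l : nat) : set 'M[nat]_k :=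
  [set A | posmx A /\ size2mx A = l].

Definition Vsol (k : nat) (A : 'M[nat]_k) : set ('M[nat]_k * 'M[nat]_k) :=
  [set XY | posmx XY.1 /\ posmx XY.2 /\ maxtimes XY.1 XY.2 = A].

(* cardinality of a finite set (fset_set of an infinite set is empty; all sets
   to which we apply it are finite) *)
Definition ncard (T : choiceType) (A : set T) : nat := #|` fset_set A|%fset.

(* Main.v *)
Require Import Defs.
From HB Require Import structures.
From mathcomp Require Import all_boot all_order all_algebra.
From mathcomp Require Import boolp classical_sets functions cardinality reals.
From mathcomp Require Import finmap.
From mathcomp Require Import zify.
Import Order.TTheory GRing.Theory Num.Theory.
Local Open Scope classical_set_scope.

Lemma ncard_seq (T : choiceType) (A : set T) (s : seq T) :
  uniq s -> A = [set` s] -> ncard A = size s.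
Proof.
move=> us ->; rewrite /ncard.
apply: perm_size; apply: uniq_perm => //.
move=> x; rewrite in_fset_set //=.
by apply/idP/idP => [/set_mem // | h]; apply: mem_set.
Qed.

Lemma seq_ncard (T : choiceType) (A : set T) :
  finite_set A -> exists s : seq T, [/\ uniq s, A = [set` s] & ncard A = size s].
Proof.
move=> fA; exists (enum_fset (fset_set A)); split => //.
apply/seteqP; split=> x /=.
  by move=> Ax; rewrite in_fset_set //; apply: mem_set.
by rewrite in_fset_set // => /set_mem.
Qed.

Lemma inj_ncard (T U : choiceType) (A : set T) (B : set U) (f : T -> U) :
  finite_set B -> (forall x y, A x -> A y -> f x = f y -> x = y) ->
  (forall x, A x -> B (f x)) -> finite_set A /\ (ncard A <= ncard B)%N.
Proof.
move=> fB finj fAB.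
have fA : finite_set A.
  apply: (card_le_finite _ fB).
  have [g] : $|{injfun A >-> B}|.
    apply/injfunPex; exists f; first by move=> x; exact: fAB.
    by move=> x y /set_mem ? /set_mem ?; apply: finj.
  exact: inj_card_le g.
split=> //.
have [s [us As ->]] := @seq_ncard _ _ fA.
have [t [ut Bt ->]] := @seq_ncard _ _ fB.
rewrite -(size_map f); apply: uniq_leq_size.
  rewrite map_inj_in_uniq // => x y xs ys; apply: finj; by rewrite As.
move=> y /mapP [x xs ->]; have : B (f x) by apply: fAB; rewrite As.
by rewrite Bt.
Qed.

Lemma ncardX (T : choiceType) (F : finType) (B : set T) :
  finite_set B -> ncard (B `*` [set: F]) = (ncard B * #|F|)%N.
Proof.
move=> fB; have [t [ut Bt ->]] := @seq_ncard _ _ fB.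
rewrite (@ncard_seq _ _ [seq (x, y) | x <- t, y <- enum F]).
- by rewrite size_allpairs cardE.
- by rewrite allpairs_uniq // ?enum_uniq // => -[??] [??].
apply/seteqP; split=> -[x y] /=.
  by rewrite Bt /= => -[xt _]; apply/allpairsP; exists (x, y); rewrite mem_enum.
case/allpairsP => -[x' y'] /= [xt _ [-> _]]; by rewrite Bt.
Qed.

Local Notation tl := (trunc_log 2).

Lemma tlog_mul x y : (0 < x -> 0 < y -> tl x + tl y <= tl (x * y))%N.
Proof.
move=> x0 y0; apply: trunc_log_max => //.
by rewrite expnD leq_mul // trunc_logP.
Qed.

Lemma tlog_enc x c r : (0 < x -> r < 2 ^ c -> tl (x * 2 ^ c + r) = tl x + c)%N.
Proof.
move=> x0 rc; apply: trunc_log_eq => //; apply/andP; split.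
  by rewrite expnD (leq_trans _ (leq_addr _ _)) // leq_mul2r trunc_logP // orbT.
rewrite -[(tl x + c).+1]addSn expnD.
have h1 : (x.+1 <= 2 ^ (tl x).+1)%N by apply: trunc_log_ltn.
have h2 : (x.+1 * 2 ^ c <= 2 ^ (tl x).+1 * 2 ^ c)%N by rewrite leq_mul2r h1 orbT.
apply: leq_trans h2; rewrite mulSn; lia.
Qed.

Lemma divmod_uniq x x' r r' d : (r < d -> r' < d -> x * d + r = x' * d + r' -> x = x' /\ r = r')%N.
Proof.
move=> rd r'd e.
have d0 : (0 < d)%N by apply: leq_ltn_trans rd.
have := congr1 (divn^~ d) e; rewrite !divnMDl // !divn_small // !addn0 => ex.
have := congr1 (modn^~ d) e; rewrite !modnMDl !modn_small //.
Qed.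

Definition tsum {k} (M : 'M[nat]_k) := (\sum_(i < k) \sum_(j < k) tl (M i j))%N.

Lemma sum_size2 k (M : 'M[nat]_k) :
  (\sum_(i < k) \sum_(j < k) size2 (M i j))%N = (tsum M + k * k)%N.
Proof.
rewrite /tsum /size2.
transitivity (\sum_(i < k) (\sum_(j < k) tl (M i j) + k))%N.
  apply: eq_bigr => i _; under eq_bigr do rewrite -addn1.
  by rewrite big_split /= sum_nat_const card_ord muln1.
by rewrite big_split /= sum_nat_const card_ord.
Qed.

Lemma term_le k (M : 'M[nat]_k) i j : (tl (M i j) <= tsum M)%N.
Proof.
rewrite /tsum (bigD1 i) //= (bigD1 j) //= -addnA; apply: leq_addr.
Qed.

Lemma key k (X Y : 'M[nat]_k) : posmx X -> posmx Y -> (0 < k)%N ->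
  (tsum X + tsum Y <= tsum (maxtimes X Y))%N.
Proof.
move=> pX pY k0; rewrite -(leq_pmul2l k0) mulnDr.
have h1 : (k * tsum X = \sum_(i < k) \sum_(j < k) \sum_(l < k) tl (X i l))%N.
  rewrite /tsum big_distrr; apply: eq_bigr => i _ /=.
  by rewrite sum_nat_const card_ord.
have h2 : (k * tsum Y = \sum_(i < k) \sum_(j < k) \sum_(l < k) tl (Y l j))%N.
  rewrite sum_nat_const card_ord /tsum exchange_big //.
rewrite h1 h2 -big_split /= /tsum big_distrr /= leq_sum // => i _.
rewrite -big_split /= big_distrr /= leq_sum // => j _.
rewrite -big_split /= -[X in (_ <= X * _)%N]card_ord -sum_nat_const leq_sum // => l _.
rewrite mxE (leq_trans (@tlog_mul _ _ (pX i l) (pY l j))) // leq_trunc_log //.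
exact: (@leq_bigmax _ (fun l0 : 'I_k => X i l0 * Y l0 j) l).
Qed.

Section Enc.
Variables (k m : nat) (i0 : 'I_k).

Definition padv (X Y : 'M[nat]_k) := (tsum (maxtimes X Y) - (tsum X + tsum Y))%N.
Definition cexp (X Y : 'M[nat]_k) (i j : 'I_k) :=
  (tl (Y i j) + (if (i == i0) && (j == i0) then padv X Y else 0))%N.
Definition encB (X Y : 'M[nat]_k) : 'M[nat]_k :=
  (\matrix_(i, j) (X i j * 2 ^ cexp X Y i j + (Y i j - 2 ^ tl (Y i j)))%N)%R.
Definition enc (XY : 'M[nat]_k * 'M[nat]_k) :
   'M[nat]_k * ('M['I_m.+1]_k * 'I_m.+1) :=
  (encB XY.1 XY.2, ((\matrix_(i, j) inord (tl (XY.2 i j)))%R, inord (padv XY.1 XY.2))).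

Lemma rem_lt (y : nat) : (0 < y)%N -> (y - 2 ^ tl y < 2 ^ tl y)%N.
Proof.
move=> y0; have h1 := @trunc_log_ltn 2 y isT; have h2 := @trunc_logP 2 y isT y0.
rewrite expnS in h1; lia.
Qed.

Lemma rem_lt_c (X Y : 'M[nat]_k) i j : posmx Y ->
  (Y i j - 2 ^ tl (Y i j) < 2 ^ cexp X Y i j)%N.
Proof.
move=> pY; apply: (leq_trans (@rem_lt _ (pY i j))).
by rewrite leq_exp2l // /cexp leq_addr.
Qed.

Lemma sum_ind (p : nat) :
  (\sum_(i < k) \sum_(j < k) (if (i == i0) && (j == i0) then p else 0) = p)%N.
Proof.
rewrite (bigD1 i0) //= [X in _ + X]big1 ?addn0; last first.
  by move=> i /negbTE ->; apply: big1.
by rewrite (bigD1 i0) //= eqxx [X in _ + X]big1 ?addn0 // => j /negbTE ->.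
Qed.

Lemma enc_in l (X Y : 'M[nat]_k) : posmx X -> posmx Y ->
  @Ml k l (maxtimes X Y) -> @Ml k l (encB X Y).
Proof.
have k0 : (0 < k)%N by case: (k) i0 => [[]|].
move=> pX pY [_ hA]; split.
  move=> i j; rewrite mxE; apply: (leq_trans _ (leq_addr _ _)).
  by rewrite muln_gt0 pX expn_gt0.
rewrite -hA /size2mx !sum_size2; congr (_ + _ - _)%N; congr (_ + _)%N.
have hk := @key _ _ _ pX pY k0.
rewrite /tsum.
transitivity (\sum_(i < k) \sum_(j < k) (tl (X i j) + tl (Y i j) + (if (i == i0) && (j == i0) then padv X Y else 0)))%N.
  apply: eq_bigr => i _; apply: eq_bigr => j _.
  by rewrite mxE tlog_enc ?pX ?rem_lt_c // /cexp addnA.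
under eq_bigr do rewrite big_split /=.
rewrite big_split /= sum_ind.
under eq_bigr do rewrite big_split /=.
rewrite big_split /= -/(tsum X) -/(tsum Y) -/(tsum (maxtimes X Y)) /padv; lia.
Qed.

Lemma enc_inj l (XY XY' : 'M[nat]_k * 'M[nat]_k) :
  (l <= m.+1)%N ->
  posmx XY.1 -> posmx XY.2 -> @Ml k l (maxtimes XY.1 XY.2) ->
  posmx XY'.1 -> posmx XY'.2 -> @Ml k l (maxtimes XY'.1 XY'.2) ->
  enc XY = enc XY' -> XY = XY'.
Proof.
have k0 : (0 < k)%N by case: (k) i0 => [[]|].
case: XY XY' => [X Y] [X' Y'] /= lm pX pY [_ hA] pX' pY' [_ hA'] [eB eD eP].
have kk : (0 < k * k)%N by rewrite muln_gt0 k0.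
have bA : (tsum (maxtimes X Y) <= m)%N.
  move: hA lm; rewrite /size2mx sum_size2 -mulnn; lia.
have bA' : (tsum (maxtimes X' Y') <= m)%N.
  move: hA' lm; rewrite /size2mx sum_size2 -mulnn; lia.
have hk := @key _ _ _ pX pY k0; have hk' := @key _ _ _ pX' pY' k0.
have eP' : padv X Y = padv X' Y'.
  move: eP => /(congr1 val); rewrite /= !inordK /padv; lia.
have eT : forall i j, tl (Y i j) = tl (Y' i j).
  move=> i j; move: eD => /matrixP /(_ i j); rewrite !mxE => /(congr1 val).
  have h1 := @term_le _ Y i j; have h2 := @term_le _ Y' i j.
  by rewrite /= !inordK //; lia.
have eC : forall i j, cexp X Y i j = cexp X' Y' i j.
  by move=> i j; rewrite /cexp eT eP'.
have ent : forall i j, X i j = X' i j /\ Y i j = Y' i j.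
  move=> i j; move: eB => /matrixP /(_ i j); rewrite !mxE -eC.
  move=> /divmod_uniq [] //; try apply: rem_lt_c => //.
    by rewrite eC; apply: rem_lt_c.
  move=> -> e2; split => //.
  have h1 := @trunc_logP 2 (Y i j) isT (pY i j).
  have h2 := @trunc_logP 2 (Y' i j) isT (pY' i j).
  move: e2 h2; rewrite -eT; lia.
by congr (_, _); apply/matrixP => i j; by case: (ent i j).
Qed.

End Enc.


Lemma size2_le k (A : 'M[nat]_k) i j : (size2 (A i j) <= size2mx A)%N.
Proof.
have h : (size2 (A i j) <= \sum_(i < k) \sum_(j < k) size2 (A i j))%N.
  by rewrite (bigD1 i) //= (bigD1 j) //= -addnA leq_addr.
rewrite /size2mx; have := @sum_size2 k A; move: h.
have : (0 < k)%N by case: (k) i => [[]|].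
rewrite -mulnn; nia.
Qed.

Local Open Scope ring_scope.

Theorem mainTheorem15 (R : realType) (k l m : nat) (P : {poly R}) :
  (1 <= k)%N -> (1 <= l)%N -> (l <= m)%N -> 0 < P.[m%:R] ->
  (ncard [set A | @Ml k l A /\ P.[m%:R] < (ncard (Vsol A))%:R]%classic)%:R
    <= (m%:R) ^+ (k ^ 2 + 1) / P.[m%:R] * (ncard (@Ml k l))%:R.
Proof.
move=> k0 l1; case: m => [|m] lm P0; first by exfalso; lia.
set p := P.[_] in P0 *.
set S := [set A | _]%classic.
pose i0 : 'I_k := Ordinal k0.
pose W := [set XY : 'M[nat]_k * 'M[nat]_k |
  posmx XY.1 /\ posmx XY.2 /\ @Ml k l (maxtimes XY.1 XY.2)]%classic.
have fMl : finite_set (@Ml k l).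
  have [] // := @inj_ncard _ _ (@Ml k l) [set: 'M['I_(2 ^ l).+1]_k]%classic
     (map_mx inord) finite_finset _ (fun _ _ => I).
  move=> A A' [_ hA] [_ hA'] e; apply/matrixP => i j.
  move: e => /matrixP /(_ i j); rewrite !mxE => /(congr1 val).
  have b1 := @size2_le k A i j; have b2 := @size2_le k A' i j.
  have c1 := @trunc_log_ltn 2 (A i j) isT.
  have c2 := @trunc_log_ltn 2 (A' i j) isT.
  have d1 : (2 ^ (trunc_log 2 (A i j)).+1 <= 2 ^ l)%N.
    by rewrite leq_exp2l // -hA.
  have d2 : (2 ^ (trunc_log 2 (A' i j)).+1 <= 2 ^ l)%N.
    by rewrite leq_exp2l // -hA'.
  rewrite /= !inordK // ltnS ltnW //; [exact: leq_trans c2 d2 | exact: leq_trans c1 d1].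
have [fW cW] := @inj_ncard _ _ W
   (@Ml k l `*` [set: 'M['I_m.+1]_k * 'I_m.+1])%classic (@enc k m i0)
   (finite_setX fMl finite_finset)
   (fun XY XY' h h' => match h, h' with conj pX (conj pY hA), conj pX' (conj pY' hA') =>
       @enc_inj k m i0 l XY XY' lm pX pY hA pX' pY' hA' end)
   (fun XY h => match h with conj pX (conj pY hA) =>
       conj (@enc_in k i0 l XY.1 XY.2 pX pY hA) I end).
rewrite ncardX // card_prod card_mx !card_ord in cW.
have fS : finite_set S by apply: sub_finite_set fMl => A [].
pose q := (Num.truncn p).+1.
have hV : forall A, S A -> (q <= ncard (Vsol A))%N.
  move=> A [_ h]; rewrite /q truncn_lt_nat //; exact: ltW.
have fV : forall A, S A -> finite_set (Vsol A).
  move=> A [hA _]; apply: sub_finite_set fW => XY [pX [pY e]].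
  by split => //; split => //; rewrite e.
pose g := fun At : 'M[nat]_k * 'I_q =>
  nth (At.1, At.1) (enum_fset (fset_set (Vsol At.1))) At.2.
have gV : forall A t, S A -> Vsol A (g (A, t)).
  move=> A t SA; have := in_fset_set (fV A SA) (g (A, t)).
  have lt : (t < size (enum_fset (fset_set (Vsol A))))%N.
    by apply: leq_trans (ltn_ord t) (hV A SA).
  by rewrite mem_nth // => /esym/set_mem.
have ginj : forall x y, (S `*` [set: 'I_q])%classic x -> (S `*` [set: 'I_q])%classic y -> g x = g y -> x = y.
  move=> [A t] [A' t'] [SA _] [SA' _] /= e.
  have v1 := gV A t SA; have v2 := gV A' t' SA'.
  rewrite /= e in v1.
  have eA : A = A'.
    by move: v1 v2; rewrite /Vsol /= => -[_ [_ e1]] [_ [_ e2]]; rewrite -e1 e2.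
  subst A'; congr (_, _); apply: val_inj; apply/eqP.
  have u := fset_uniq (fset_set (Vsol A)).
  have lt1 : (t < size (enum_fset (fset_set (Vsol A))))%N.
    by apply: leq_trans (ltn_ord t) (hV A SA).
  have lt2 : (t' < size (enum_fset (fset_set (Vsol A))))%N.
    by apply: leq_trans (ltn_ord t') (hV A SA).
  by rewrite -(nth_uniq (A, A) lt1 lt2 u); apply/eqP.
have gW : forall x, (S `*` [set: 'I_q])%classic x -> W (g x).
  move=> [A t] [SA _]; have [pX [pY e]] := gV A t SA.
  by split => //; split => //; rewrite e; case: SA.
have [_ cS] := @inj_ncard _ _ (S `*` [set: 'I_q])%classic W g fW ginj gW.
rewrite ncardX // card_ord in cS.
rewrite mulrAC ler_pdivlMr //.
apply: (@le_trans _ _ (ncard S * q)%:R).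
  by rewrite natrM ler_wpM2l // ltW // truncnS_gt.
rewrite -natrX -natrM ler_nat (leq_trans cS) // (leq_trans cW) //.
by rewrite mulnC expnD expn1 -mulnn.
Qed.
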